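(* Let $\beta\in\mathbb{N}=\{0,1,2,\dots\}$ and $\alpha\in\mathbb{D}\setminus\{0\}$. Let $\phi_\alpha(z)=\dfrac{\alpha-z}{1-\overline{\alpha}z}$ and, for each non-negative integer $n$, let $v_n:=C_{\phi_\alpha}^*z^n$, where $C_{\phi_\alpha}f=f\circ\phi_\alpha$ acts on $A^2_\beta$ and $^*$ denotes the adjoint in $A^2_\beta$. Then $\langle v_n,v_0\rangle=0$ whenever $n>2+\beta$.
   Context: $\mathbb{D}$ is the open unit disc. For $\beta>-1$, $A^2_\beta$ is the Hilbert space of analytic functions $f(z)=\sum_{n\ge0}\widehat f(n)z^n$ on $\mathbb{D}$ with inner product $\langle f,g\rangle=\sum_{n\ge0}\frac{n!\,\Gamma(2+\beta)}{\Gamma(n+2+\beta)}\widehat f(n)\overline{\widehat g(n)}$ (equivalently the $L^2$ inner product with respect to $(\beta+1)(1-|z|^2)^\beta dA(z)$). *)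

(* Defs.v *)
From Stdlib Require Import Reals Arith.
From Coquelicot Require Import Coquelicot.
Open Scope R_scope.

(* Weight of A^2_beta for beta a natural number:
   n! Gamma(2+beta) / Gamma(n+2+beta) = n! (beta+1)! / (n+beta+1)! *)
Definition wgt (beta n : nat) : R :=
  INR (fact n * fact (beta + 1)) / INR (fact (n + beta + 1)).

(* An element f(z) = sum a_n z^n of A^2_beta is represented by its Taylor
   coefficient sequence a; membership = finite norm. *)
Definition inA2 (beta : nat) (a : nat -> C) : Prop :=
  ex_series (fun n => wgt beta n * (Cmod (a n))^2).

Definition A2_inner_is (beta : nat) (a b : nat -> C) (l : C) : Prop :=
  is_series (fun n => (RtoC (wgt beta n) * (a n * Cconj (b n)))%C) l.

Definition monom (n : nat) : nat -> C :=
  fun k => if Nat.eqb k n then 1%C else 0%C.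

Definition phi (alpha z : C) : C :=
  ((alpha - z) / (1 - Cconj alpha * z))%C.

(* cg is the Taylor coefficient sequence of g o phi_alpha on the disc,
   i.e. cg represents C_{phi_alpha} g. *)
Definition comp_coeffs (alpha : C) (g cg : nat -> C) : Prop :=
  forall z : C, Cmod z < 1 ->
    exists w : C, is_pseries g (phi alpha z) w /\ is_pseries cg z w.

Definition is_comp_adjoint (beta : nat) (alpha : C) (f v : nat -> C) : Prop :=
  inA2 beta v /\
  forall g cg : nat -> C, inA2 beta g -> comp_coeffs alpha g cg ->
    exists l : C, A2_inner_is beta g v l /\ A2_inner_is beta cg f l.

(* Main.v *)
Require Import Defs.
From Stdlib Require Import Reals Arith.
From Coquelicot Require Import Coquelicot.
From Stdlib Require Import Lia Lra.
Open Scope R_scope.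

Lemma sum_n_single {G : AbelianMonoid} (f : nat -> G) k :
  (forall j, j <> k -> f j = zero) ->
  forall N, sum_n f N = if Nat.leb k N then f k else zero.
Proof.
  intros Hf N; induction N as [|N IH].
  - rewrite sum_O. destruct k; simpl; [reflexivity| apply Hf; lia].
  - rewrite sum_Sn, IH.
    destruct (Nat.leb k N) eqn:E1; destruct (Nat.leb k (S N)) eqn:E2.
    + apply Nat.leb_le in E1. rewrite (Hf (S N)) by lia. apply plus_zero_r.
    + apply Nat.leb_le in E1. apply Nat.leb_gt in E2. lia.
    + apply Nat.leb_gt in E1. apply Nat.leb_le in E2.
      assert (k = S N) by lia. subst. apply plus_zero_l.
    + rewrite (Hf (S N)). apply plus_zero_l. apply Nat.leb_gt in E2. lia.
Qed.

Lemma ser_single {K : AbsRing} {V : NormedModule K} (f : nat -> V) k l :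
  (forall j, j <> k -> f j = zero) -> f k = l -> is_series f l.
Proof.
  intros Hf Hl. subst l. unfold is_series.
  apply filterlim_ext_loc with (fun _ => f k).
  - exists k. intros N HN. rewrite (sum_n_single f k Hf N).
    apply Nat.leb_le in HN. now rewrite HN.
  - apply filterlim_const.
Qed.

Lemma ser_unique {K : AbsRing} {V : NormedModule K} (f : nat -> V) l1 l2 :
  is_series f l1 -> is_series f l2 -> l1 = l2.
Proof.
  intros H1 H2. exact (filterlim_locally_unique _ _ _ H1 H2).
Qed.

Lemma sum_n_conj (f : nat -> C) N :
  sum_n (fun n => Cconj (f n)) N = Cconj (sum_n f N).
Proof.
  induction N as [|N IH].
  - now rewrite !sum_O.
  - rewrite !sum_Sn, IH. change (Cconj (sum_n f N) + Cconj (f (S N)) = Cconj (sum_n f N + f (S N)))%C.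
    now rewrite Cplus_conj.
Qed.

Lemma ser_conj (f : nat -> C) l :
  is_series f l -> is_series (fun n => Cconj (f n)) (Cconj l).
Proof.
  unfold is_series. intros H.
  apply filterlim_ext with (fun N => Cconj (sum_n f N)).
  { intro N. now rewrite sum_n_conj. }
  apply filterlim_comp with (1 := H).
  apply filterlim_locally. intros eps. exists eps. intros y [H1 H2].
  split.
  - exact H1.
  - revert H2. unfold ball; simpl. unfold AbsRing_ball, abs, minus, plus, opp; simpl.
    intro H2. replace (- snd y + - - snd l) with (- (snd y + - snd l)) by ring.
    now rewrite Rabs_Ropp.
Qed.

Lemma pow_n_C (x : C) k : pow_n x k = (x ^ k)%C.
Proof. induction k; simpl; [reflexivity| now rewrite IHk]. Qed.

Lemma pseries_iff (a : nat -> C) x l :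
  is_pseries a x l <-> is_series (fun k => (a k * x ^ k)%C) l.
Proof.
  unfold is_pseries.
  assert (E : forall k, scal (pow_n x k) (a k) = (a k * x ^ k)%C).
  { intro k. change (scal (pow_n x k) (a k)) with (pow_n x k * a k)%C.
    rewrite pow_n_C. apply Cmult_comm. }
  split; apply is_series_ext; intro k; now rewrite E.
Qed.

Lemma ser_ext2 {K : AbsRing} {V : NormedModule K} (a b : nat -> V) l1 l2 :
  (forall n, a n = b n) -> l1 = l2 -> is_series a l1 -> is_series b l2.
Proof. intros H E. subst. now apply is_series_ext. Qed.

Ltac cring := match goal with |- ?a = ?b => change (@eq C a b) end; ring.

Definition prevs (a : nat -> C) (j : nat) : C :=
  match j with O => 0%C | S i => a i end.
Definition Mop (c0 c1 : C) (a : nat -> C) (j : nat) : C :=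
  (c0 * a j + c1 * prevs a j)%C.

Lemma Mop_ser (c0 c1 x w : C) (a : nat -> C) :
  is_series (fun j => (a j * x ^ j)%C) w ->
  is_series (fun j => (Mop c0 c1 a j * x ^ j)%C) ((c0 + c1 * x) * w)%C.
Proof.
  intros H.
  assert (H1 := is_series_scal c0 _ _ H).
  assert (H2 : is_series (fun j => (c1 * prevs a j * x ^ j)%C) (c1 * x * w)%C).
  { apply is_series_decr_1.
    assert (H3 := is_series_scal (c1 * x)%C _ _ H).
    eapply ser_ext2; [| |exact H3].
    - intro n. simpl. change (scal (c1 * x)%C (a n * x ^ n)%C) with ((c1 * x) * (a n * x ^ n))%C. cring.
    - change (scal (c1 * x)%C w) with ((c1 * x) * w)%C.
      change (plus (c1 * x * w)%C (opp (c1 * prevs a 0 * x ^ 0)%C)) with ((c1 * x * w) + - (c1 * 0 * 1))%C.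
      cring. }
  assert (H4 := is_series_plus _ _ _ _ H1 H2).
  eapply ser_ext2; [| |exact H4].
  - intro n. unfold Mop. change (plus (scal c0 (a n * x ^ n)%C) (c1 * prevs a n * x ^ n)%C)
      with ((c0 * (a n * x ^ n)) + (c1 * prevs a n * x ^ n))%C. cring.
  - change (plus (scal c0 w) (c1 * x * w)%C) with (c0 * w + c1 * x * w)%C. cring.
Qed.

Lemma iterM_ser (c0 c1 x w : C) (s : nat -> C) m :
  is_series (fun j => (s j * x ^ j)%C) w ->
  is_series (fun j => (Nat.iter m (Mop c0 c1) s j * x ^ j)%C) ((c0 + c1 * x) ^ m * w)%C.
Proof.
  intros H. induction m as [|m IH].
  - simpl. eapply ser_ext2; [| |exact H]; [intro; reflexivity| cring].
  - simpl. eapply ser_ext2; [| |exact (Mop_ser c0 c1 x _ _ IH)]; [intro; reflexivity| cring].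
Qed.

Lemma iterM_0 (c0 c1 : C) (s : nat -> C) m :
  Nat.iter m (Mop c0 c1) s 0%nat = (c0 ^ m * s 0%nat)%C.
Proof.
  induction m as [|m IH]; simpl.
  - ring.
  - unfold Mop at 1. rewrite IH. simpl. ring.
Qed.

Lemma iterM_supp (c0 c1 : C) (s : nat -> C) d :
  (forall j, (d < j)%nat -> s j = 0%C) ->
  forall m j, (d + m < j)%nat -> Nat.iter m (Mop c0 c1) s j = 0%C.
Proof.
  intros Hs m. induction m as [|m IH]; intros j Hj; simpl.
  - apply Hs. lia.
  - unfold Mop at 1. rewrite IH by lia. destruct j as [|j]; [lia|]. simpl.
    rewrite IH by lia. ring.
Qed.

Lemma Cpow_nz (b : C) n : b <> 0%C -> (b ^ n)%C <> 0%C.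
Proof.
  intros Hb E. apply (f_equal Cmod) in E. rewrite Cmod_pow, Cmod_0 in E.
  apply Cmod_gt_0 in Hb. apply (pow_lt _ n) in Hb. lra.
Qed.

Lemma Cdiv_pow (a b : C) n : b <> 0%C -> ((a / b) ^ n = a ^ n / b ^ n)%C.
Proof.
  intros Hb. induction n as [|n IH]; simpl.
  - field. try (intro H; injection H; lra).
  - rewrite IH. field. split; [apply Cpow_nz|]; auto.
Qed.

Lemma one_minus_nz (x : C) : Cmod x < 1 -> (1 - x)%C <> 0%C.
Proof.
  intros Hx E. assert (x = 1%C). { replace x with (1 - (1 - x))%C by ring. rewrite E. ring. }
  subst. rewrite Cmod_1 in Hx. lra.
Qed.

Definition Dc (k j : nat) : R :=
  match k with
  | O => if Nat.eqb j 0 then 1 else 0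
  | S m => Binomial.C (j + m) j
  end.

Lemma Dc_0 k : Dc k 0 = 1.
Proof. destruct k; simpl; [reflexivity| apply C_n_0]. Qed.

Lemma Dc_rec k j : Dc (S k) (S j) = Dc (S k) j + Dc k (S j).
Proof.
  destruct k as [|m]; simpl.
  - rewrite !Nat.add_0_r, !C_n_n. ring.
  - rewrite <- (pascal (j + S m) j) by lia.
    replace (S (j + m)) with (j + S m)%nat by lia. ring.
Qed.

Lemma C_pos n k : (k <= n)%nat -> 0 < Binomial.C n k.
Proof.
  intros _. unfold Binomial.C. apply Rdiv_lt_0_compat.
  - apply lt_0_INR, lt_O_fact.
  - apply Rmult_lt_0_compat; apply lt_0_INR, lt_O_fact.
Qed.

Lemma C_ratio n m :
  Binomial.C (S n + m) (S n) * INR (S n) = Binomial.C (n + m) n * INR (S n + m).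
Proof.
  unfold Binomial.C.
  replace (S n + m - S n)%nat with m by lia.
  replace (n + m - n)%nat with m by lia.
  replace (S n + m)%nat with (S (n + m)) by lia.
  rewrite !fact_simpl, !mult_INR.
  assert (H1 := INR_fact_neq_0 n). assert (H2 := INR_fact_neq_0 m).
  assert (H3 := INR_fact_neq_0 (n + m)).
  assert (H4 : INR (S n) <> 0) by (apply not_0_INR; lia).
  field. auto.
Qed.

Lemma ex_series_real_D m r : 0 < r < 1 ->
  ex_series (fun j => Binomial.C (j + m) j * r ^ j).
Proof.
  intros Hr.
  apply ex_series_ext with (fun j => Rabs (Binomial.C (j + m) j * r ^ j)).
  { intro j. apply Rabs_pos_eq. apply Rmult_le_pos; [apply Rlt_le, C_pos; lia| apply pow_le; lra]. }
  apply ex_series_DAlembert with r; [lra| |].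
  { intro j. apply Rgt_not_eq, Rmult_lt_0_compat; [apply C_pos; lia| apply pow_lt; lra]. }
  apply is_lim_seq_ext with (fun n => (1 + INR m * / INR (S n)) * r).
  { intro n. assert (H := C_ratio n m).
    assert (Hc := C_pos (n + m) n ltac:(lia)).
    assert (HS : 0 < INR (S n)) by (apply lt_0_INR; lia).
    assert (Hrn : 0 < r ^ n) by (apply pow_lt; lra).
    replace (Binomial.C (S n + m) (S n) * r ^ S n / (Binomial.C (n + m) n * r ^ n))
      with (INR (S n + m) / INR (S n) * r).
    2:{ assert (H' : Binomial.C (S n + m) (S n) = Binomial.C (n + m) n * INR (S n + m) / INR (S n))
          by (rewrite <- H; field; lra).
        rewrite H'. simpl pow. field. split; lra. }
    rewrite Rabs_pos_eq.
    2:{ apply Rmult_le_pos; [|lra]. apply Rlt_le, Rdiv_lt_0_compat; auto. apply lt_0_INR; lia. }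
    rewrite plus_INR. field. lra. }
  replace (Finite r) with (Rbar_mult (Rbar_plus 1 (Rbar_mult (INR m) 0)) r)
    by (simpl; f_equal; ring).
  apply is_lim_seq_mult'; [|apply is_lim_seq_const].
  apply is_lim_seq_plus'; [apply is_lim_seq_const|].
  apply is_lim_seq_mult'; [apply is_lim_seq_const|].
  replace (Finite 0) with (Rbar_inv p_infty) by reflexivity.
  apply is_lim_seq_inv; [|discriminate].
  apply is_lim_seq_incr_1 with (u := INR). apply is_lim_seq_INR.
Qed.

Lemma NB k x : Cmod x < 1 ->
  is_series (fun j => (RtoC (Dc k j) * x ^ j)%C) (/ (1 - x) ^ k)%C.
Proof.
  intros Hx. assert (Hnz := one_minus_nz x Hx).
  induction k as [|k IH].
  - apply ser_single with 0%nat.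
    + intros j Hj. simpl. destruct j; [lia|]. simpl. apply Cmult_0_l.
    + simpl. field. try (intro H; injection H; lra).
  - assert (Hex : ex_series (fun j => (RtoC (Dc (S k) j) * x ^ j)%C)).
    { set (r := (1 + Cmod x) / 2).
      assert (Hc0 : 0 <= Cmod x) by apply Cmod_ge_0.
      apply (@ex_series_le C_AbsRing C_CompleteNormedModule) with (fun j => Binomial.C (j + k) j * r ^ j).
      - intro j. change (norm (RtoC (Dc (S k) j) * x ^ j)%C) with (Cmod (RtoC (Dc (S k) j) * x ^ j)%C).
        rewrite Cmod_mult, Cmod_pow, Cmod_R. simpl Dc.
        rewrite Rabs_pos_eq by (apply Rlt_le, C_pos; lia).
        apply Rmult_le_compat_l; [apply Rlt_le, C_pos; lia|].
        apply pow_incr. unfold r. lra.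
      - apply ex_series_real_D. unfold r. lra. }
    destruct Hex as [L HL]. change C in L.
    assert (HM := Mop_ser 1 (-1) x _ _ HL).
    assert (HM' : is_series (fun j => (RtoC (Dc k j) * x ^ j)%C) ((1 + -1 * x) * L)%C).
    { eapply ser_ext2; [| |exact HM]; [|reflexivity].
      intro j. unfold Mop. destruct j as [|j]; cbn [prevs].
      - rewrite !Dc_0. cring.
      - rewrite Dc_rec, RtoC_plus. cring. }
    assert (E := ser_unique _ _ _ HM' IH).
    replace (/ (1 - x) ^ S k)%C with L; [exact HL|].
    transitivity ((1 + -1 * x) * L / (1 - x))%C; [change (@eq C L ((1 + -1 * x) * L / (1 - x))%C); field; auto|].
    rewrite E. simpl. field. split; auto. apply Cpow_nz; auto.
Qed.

Lemma wgt_pos beta j : 0 < wgt beta j.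
Proof.
  unfold wgt. apply Rdiv_lt_0_compat; apply lt_0_INR.
  - apply Nat.mul_pos_pos; apply lt_O_fact.
  - apply lt_O_fact.
Qed.

Lemma wgt_Dc beta j : Dc (S (S beta)) j = / wgt beta j.
Proof.
  unfold wgt, Dc, Binomial.C.
  replace (j + S beta - j)%nat with (beta + 1)%nat by lia.
  replace (j + beta + 1)%nat with (j + S beta)%nat by lia.
  rewrite mult_INR.
  assert (H1 := INR_fact_neq_0 j). assert (H2 := INR_fact_neq_0 (beta + 1)).
  assert (H3 := INR_fact_neq_0 (j + S beta)).
  field. auto.
Qed.

Lemma wgt0 beta : wgt beta 0 = 1.
Proof.
  unfold wgt. rewrite Nat.mul_1_l, Nat.add_0_l. field. apply INR_fact_neq_0.
Qed.

Lemma Cconj_R (r : R) : Cconj (RtoC r) = RtoC r.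
Proof. apply injective_projections; simpl; ring. Qed.

Lemma phi_disc (alpha z : C) : Cmod alpha < 1 -> Cmod z < 1 -> Cmod (phi alpha z) < 1.
Proof.
  intros Ha Hz.
  assert (Hx : Cmod (Cconj alpha * z) < 1).
  { rewrite Cmod_mult, Cmod_conj.
    assert (0 <= Cmod alpha) by apply Cmod_ge_0. assert (0 <= Cmod z) by apply Cmod_ge_0. nra. }
  assert (Hnz := one_minus_nz _ Hx).
  unfold phi. rewrite Cmod_div by exact Hnz.
  assert (Hp := proj1 (Cmod_gt_0 _) Hnz).
  apply (Rmult_lt_reg_r (Cmod (1 - Cconj alpha * z))); auto.
  unfold Rdiv. rewrite Rmult_assoc, Rinv_l by lra. rewrite Rmult_1_r, Rmult_1_l.
  destruct alpha as [a1 a2], z as [z1 z2]. unfold Cmod in *. simpl in *.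
  apply sqrt_lt_1_alt. rewrite !Rmult_1_r in *.
  assert (A : a1 * a1 + a2 * a2 < 1).
  { apply Rnot_le_lt. intro HH. apply sqrt_le_1_alt in HH. rewrite sqrt_1 in HH. lra. }
  assert (Z : z1 * z1 + z2 * z2 < 1).
  { apply Rnot_le_lt. intro HH. apply sqrt_le_1_alt in HH. rewrite sqrt_1 in HH. lra. }
  split.
  - pose proof (Rle_0_sqr (a1 + - z1)). pose proof (Rle_0_sqr (a2 + - z2)). unfold Rsqr in *. lra.
  - assert (E : (1 + - (a1 * z1 - - a2 * z2)) * (1 + - (a1 * z1 - - a2 * z2)) +
        (0 + - (a1 * z2 + - a2 * z1)) * (0 + - (a1 * z2 + - a2 * z1)) -
        ((a1 + - z1) * (a1 + - z1) + (a2 + - z2) * (a2 + - z2))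
        = (1 - (a1 * a1 + a2 * a2)) * (1 - (z1 * z1 + z2 * z2))) by ring.
    assert (0 < (1 - (a1 * a1 + a2 * a2)) * (1 - (z1 * z1 + z2 * z2))) by (apply Rmult_lt_0_compat; lra).
    lra.
Qed.
Ltac rring := match goal with |- ?a = ?b => change (@eq R a b) end; ring.

Theorem lemma5p1 (beta : nat) (alpha : C) (n : nat) (vn v0 : nat -> C) :
  0 < Cmod alpha < 1 ->
  (2 + beta < n)%nat ->
  is_comp_adjoint beta alpha (monom n) vn ->
  is_comp_adjoint beta alpha (monom 0) v0 ->
  A2_inner_is beta vn v0 0%C.
Proof.
  intros [Ha0 Ha1] Hn [Hvn_in Hvn] [Hv0_in Hv0].
  set (ab := Cconj alpha).
  assert (Hab : Cmod ab < 1) by (unfold ab; rewrite Cmod_conj; lra).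
  assert (Hcoef : forall j, v0 j = (ab ^ j / RtoC (wgt beta j))%C).
  { intro j.
    destruct (Hv0 (monom j) (Nat.iter j (Mop alpha (-1)) (fun i => (RtoC (Dc j i) * ab ^ i)%C)))
      as [l [H1 H2]].
    - unfold inA2. exists (wgt beta j). apply ser_single with j.
      + intros i Hi. unfold monom. rewrite (proj2 (Nat.eqb_neq i j) Hi), Cmod_0.
        unfold zero; simpl. rring.
      + unfold monom. rewrite Nat.eqb_refl, Cmod_1. rring.
    - intros z Hz. exists (phi alpha z ^ j)%C. split.
      + apply pseries_iff. apply ser_single with j.
        * intros i Hi. unfold monom. rewrite (proj2 (Nat.eqb_neq i j) Hi). apply Cmult_0_l.
        * unfold monom. rewrite Nat.eqb_refl. cring.
      + apply pseries_iff.
        assert (Hx : Cmod (ab * z) < 1).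
        { rewrite Cmod_mult.
          assert (0 <= Cmod ab) by apply Cmod_ge_0. assert (0 <= Cmod z) by apply Cmod_ge_0. nra. }
        assert (Hnz := one_minus_nz _ Hx).
        assert (HN := NB j (ab * z) Hx).
        assert (HN' : is_series (fun i => (RtoC (Dc j i) * ab ^ i) * z ^ i)%C (/ (1 - ab * z) ^ j)%C).
        { eapply ser_ext2; [| |exact HN]; [|reflexivity]. intro i. cbv beta. rewrite Cpow_mult_l. cring. }
        eapply ser_ext2; [| |exact (iterM_ser alpha (-1) z _ _ j HN')]; [intro; reflexivity|].
        unfold phi. fold ab. rewrite Cdiv_pow by exact Hnz.
        change (@eq C ((alpha + -1 * z) ^ j * / (1 - ab * z) ^ j)%C ((alpha - z) ^ j / (1 - ab * z) ^ j)%C).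
        replace (alpha + -1 * z)%C with (alpha - z)%C by ring. reflexivity.
    - change C in l.
      assert (E1 : l = (RtoC (wgt beta j) * (1 * Cconj (v0 j)))%C).
      { apply (ser_unique _ _ _ H1). apply ser_single with j.
        - intros i Hi. unfold monom. rewrite (proj2 (Nat.eqb_neq i j) Hi).
          unfold zero; simpl. cring.
        - unfold monom. rewrite Nat.eqb_refl. reflexivity. }
      assert (E2 : l = (RtoC (wgt beta 0) * (alpha ^ j * Cconj 1))%C).
      { apply (ser_unique _ _ _ H2). apply ser_single with 0%nat.
        - intros i Hi. unfold monom. rewrite (proj2 (Nat.eqb_neq i 0) Hi).
          unfold zero; simpl. rewrite (Cconj_R 0). cring.
        - unfold monom. simpl Nat.eqb. cbv iota. rewrite iterM_0, Dc_0. simpl. ring. }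
      rewrite E1, wgt0 in E2. rewrite Cconj_R in E2.
      assert (Hw := wgt_pos beta j).
      assert (Hw' : RtoC (wgt beta j) <> 0%C) by (intro HH; injection HH; lra).
      assert (E3 : Cconj (v0 j) = (alpha ^ j / RtoC (wgt beta j))%C).
      { transitivity (RtoC (wgt beta j) * (1 * Cconj (v0 j)) / RtoC (wgt beta j))%C; [field; auto|].
        rewrite E2. field. auto. }
      rewrite <- (Cconj_conj (v0 j)), E3, Cdiv_conj by auto.
      rewrite Cpow_conj, Cconj_R. reflexivity. }
  set (c := (1 - alpha * ab)%C).
  assert (Hc : c <> 0%C).
  { apply one_minus_nz. rewrite Cmod_mult. unfold ab. rewrite Cmod_conj. nra. }
  set (m := S (S beta)).
  set (s := fun i => if Nat.eqb i 0 then (/ c ^ m)%C else 0%C).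
  set (cg := Nat.iter m (Mop 1 (-ab)) s).
  assert (Hcomp : comp_coeffs alpha v0 cg).
  { intros z Hz. exists (/ (1 - ab * phi alpha z) ^ m)%C.
    assert (Hx : Cmod (ab * z) < 1).
    { rewrite Cmod_mult.
      assert (0 <= Cmod ab) by apply Cmod_ge_0. assert (0 <= Cmod z) by apply Cmod_ge_0. nra. }
    assert (Hnz := one_minus_nz _ Hx).
    split.
    - apply pseries_iff.
      assert (Hy : Cmod (ab * phi alpha z) < 1).
      { rewrite Cmod_mult. assert (Hp := phi_disc alpha z ltac:(lra) Hz).
        assert (0 <= Cmod ab) by apply Cmod_ge_0. assert (0 <= Cmod (phi alpha z)) by apply Cmod_ge_0. nra. }
      eapply ser_ext2; [| |exact (NB m _ Hy)]; [|reflexivity].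
      intro i. cbv beta. rewrite Hcoef. unfold m. rewrite wgt_Dc.
      assert (Hw := wgt_pos beta i).
      rewrite RtoC_inv by lra. rewrite Cpow_mult_l.
      assert (Hw' : RtoC (wgt beta i) <> 0%C) by (intro HH; injection HH; lra).
      match goal with |- ?a = ?b => change (@eq C a b) end. field. auto.
    - apply pseries_iff.
      assert (Hs : is_series (fun j => (s j * z ^ j)%C) (/ c ^ m)%C).
      { apply ser_single with 0%nat.
        - intros i Hi. unfold s. rewrite (proj2 (Nat.eqb_neq i 0) Hi). apply Cmult_0_l.
        - unfold s. simpl. cring. }
      eapply ser_ext2; [| |exact (iterM_ser 1 (-ab) z _ _ m Hs)]; [intro; reflexivity|].
      assert (E : (1 - ab * phi alpha z = c / (1 - ab * z))%C).
      { unfold phi, c. fold ab. field. exact Hnz. }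
      change (@eq C ((1 + - ab * z) ^ m * / c ^ m)%C (/ (1 - ab * phi alpha z) ^ m)%C).
      rewrite E, Cdiv_pow by exact Hnz.
      assert (H1 := Cpow_nz c m Hc). assert (H2 := Cpow_nz _ m Hnz).
      replace (1 + - ab * z)%C with (1 - ab * z)%C by ring.
      field. auto. }
  destruct (Hvn v0 cg Hv0_in Hcomp) as [l [H1 H2]].
  change C in l.
  assert (El : l = 0%C).
  { apply (ser_unique _ _ _ H2). apply ser_single with n.
    - intros i Hi. unfold monom. rewrite (proj2 (Nat.eqb_neq i n) Hi).
      unfold zero; simpl. rewrite (Cconj_R 0). cring.
    - unfold monom. rewrite Nat.eqb_refl.
      assert (HS : forall j, (0 < j)%nat -> s j = 0%C).
      { intros j Hj. unfold s. destruct j; [lia|reflexivity]. }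
      unfold cg. rewrite (iterM_supp 1 (-ab) s 0%nat HS m n) by (unfold m; lia).
      cring. }
  subst l. apply ser_conj in H1.
  eapply ser_ext2; [| |exact H1].
  - intro i. cbv beta. rewrite !Cmult_conj, Cconj_conj, Cconj_R. cring.
  - rewrite (Cconj_R 0). reflexivity.
Qed.
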